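(* Let $(\mathfrak g,\cdot)$ be a perm algebra, $\omega\in(\mathfrak g\otimes\mathfrak g)^*$ symmetric such that $(\mathfrak g,\cdot,\omega)$ is a symplectic perm algebra, and $r=\sum r^1\otimes r^2\in\mathfrak g\otimes\mathfrak g$ symmetric. Assume (i) $r$ satisfies the classical perm Yang–Baxter equation $r_{13}r_{12}-r_{13}r_{23}+r_{23}r_{12}-r_{12}r_{23}=0$ in $(\mathfrak g,\cdot)$ (so $(\mathfrak g,\cdot,r,\Delta_r)$ is a quasitriangular perm bialgebra), and (ii) $\omega$ satisfies the classical co-perm Yang–Baxter equation in the perm coalgebra $(\mathfrak g,\Delta_r)$ (so $(\mathfrak g,\Delta_r,\omega,\cdot_\omega)$ is a dual quasitriangular perm bialgebra). Then $N:\mathfrak g\to\mathfrak g$, $N(x)=\omega(x,r^1)r^2$, is a Nijenhuis operator on $(\mathfrak g,\cdot)$, i.e. $N(x)N(y)+N^2(xy)=N(N(x)y)+N(xN(y))$ for all $x,y$.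
   Context: Over a field $K$. A (right) perm algebra: bilinear product with $(xy)z=x(yz)=x(zy)$. $(\mathfrak g,\cdot,\omega)$ symplectic: $\omega$ symmetric and $\omega(xy,z)+\omega(xz,y)=\omega(zx,y)+\omega(zy,x)$ for all $x,y,z$. For $r$ with second copy $\bar r$: $\Delta_r(x)=xr^1\otimes r^2+r^1\otimes xr^2-r^1\otimes r^2x$ (Sweedler notation $\Delta_r(x)=x_{(1)}\otimes x_{(2)}$); $r_{13}r_{12}=r^1\bar r^1\otimes\bar r^2\otimes r^2$, $r_{13}r_{23}=r^1\otimes\bar r^1\otimes r^2\bar r^2$, $r_{23}r_{12}=\bar r^1\otimes r^1\bar r^2\otimes r^2$, $r_{12}r_{23}=r^1\otimes r^2\bar r^1\otimes\bar r^2$. Classical co-perm Yang–Baxter equation in $(\mathfrak g,\Delta)$: $\omega(x_{(1)},z)\omega(x_{(2)},y)-\omega(x,z_{(1)})\omega(y,z_{(2)})+\omega(y_{(1)},z)\omega(x,y_{(2)})-\omega(x,y_{(1)})\omega(y_{(2)},z)=0$ for all $x,y,z$; $\cdot_\omega$ is $x\cdot_\omega y=x_{(1)}\omega(x_{(2)},y)+y_{(1)}\omega(x,y_{(2)})-y_{(2)}\omega(x,y_{(1)})$. *)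

(* Defs.v *)
(* The perm algebra g is modelled as K^n = 'rV[K]_n
   (finite dimensional), with standard basis e i.  Tensors in g(x)g are
   encoded by their coefficient matrices in the basis e_i (x) e_j, and
   3-tensors by their coefficient functions. *)
From mathcomp Require Import all_boot all_order all_algebra.
Set Implicit Arguments. Unset Strict Implicit. Unset Printing Implicit Defensive.
Import GRing.Theory.
Local Open Scope ring_scope.

Section PermDefs.
Variables (K : fieldType) (n : nat).
Notation V := 'rV[K]_n.

Definition e (i : 'I_n) : V := delta_mx 0 i.

Definition bilinear_prod (mul : V -> V -> V) : Prop :=
  (forall (a : K) (x y z : V), mul (a *: x + y) z = a *: mul x z + mul y z) /\
  (forall (a : K) (x y z : V), mul x (a *: y + z) = a *: mul x y + mul x z).

Definition perm_algebra (mul : V -> V -> V) : Prop :=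
  bilinear_prod mul /\
  (forall x y z, mul (mul x y) z = mul x (mul y z)) /\
  (forall x y z, mul x (mul y z) = mul x (mul z y)).

Definition bform (W : 'M[K]_n) (x y : V) : K := (x *m W *m y^T) 0 0.

Definition symplectic (mul : V -> V -> V) (W : 'M[K]_n) : Prop :=
  W^T = W /\
  forall x y z,
    bform W (mul x y) z + bform W (mul x z) y =
    bform W (mul z x) y + bform W (mul z y) x.

Definition t3 (x y z : V) (p q s : 'I_n) : K := x 0 p * y 0 q * z 0 s.

(* r = \sum_{a,b} R a b e_a (x) e_b, \bar r a second copy *)
Definition r13r12 mul (R : 'M[K]_n) p q s : K :=
  \sum_a \sum_b \sum_c \sum_d
     R a b * R c d * t3 (mul (e a) (e c)) (e d) (e b) p q s.
Definition r13r23 mul (R : 'M[K]_n) p q s : K :=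
  \sum_a \sum_b \sum_c \sum_d
     R a b * R c d * t3 (e a) (e c) (mul (e b) (e d)) p q s.
Definition r23r12 mul (R : 'M[K]_n) p q s : K :=
  \sum_a \sum_b \sum_c \sum_d
     R a b * R c d * t3 (e c) (mul (e a) (e d)) (e b) p q s.
Definition r12r23 mul (R : 'M[K]_n) p q s : K :=
  \sum_a \sum_b \sum_c \sum_d
     R a b * R c d * t3 (e a) (mul (e b) (e c)) (e d) p q s.

Definition CPYBE mul (R : 'M[K]_n) : Prop :=
  forall p q s,
    r13r12 mul R p q s - r13r23 mul R p q s + r23r12 mul R p q s
      - r12r23 mul R p q s = 0.

(* Sweedler evaluation: for f bilinear, Delta_ev mul R x f = f(x_(1), x_(2))
   where Delta_r(x) = x r^1 (x) r^2 + r^1 (x) x r^2 - r^1 (x) r^2 x. *)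
Definition Delta_ev mul (R : 'M[K]_n) (x : V) (f : V -> V -> K) : K :=
  \sum_a \sum_b R a b *
     (f (mul x (e a)) (e b) + f (e a) (mul x (e b)) - f (e a) (mul (e b) x)).

Definition CcoPYBE mul (R W : 'M[K]_n) : Prop :=
  forall x y z,
    Delta_ev mul R x (fun u v => bform W u z * bform W v y)
    - Delta_ev mul R z (fun u v => bform W x u * bform W y v)
    + Delta_ev mul R y (fun u v => bform W u z * bform W x v)
    - Delta_ev mul R y (fun u v => bform W x u * bform W v z) = 0.

Definition Nop (R W : 'M[K]_n) (x : V) : V :=
  \sum_a \sum_b R a b * bform W x (e a) *: e b.

Definition nijenhuis (mul : V -> V -> V) (N : V -> V) : Prop :=
  forall x y, mul (N x) (N y) + N (N (mul x y)) = N (mul (N x) y) + N (mul x (N y)).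

End PermDefs.

Definition symmetric_tensor (K : fieldType) (n : nat) (R : 'M[K]_n) : Prop :=
  R^T = R.

(* Main.v *)
Require Import Defs.
From mathcomp Require Import all_boot all_order all_algebra.
From mathcomp Require Import ring.
Set Implicit Arguments. Unset Strict Implicit. Unset Printing Implicit Defensive.
Import GRing.Theory.
Local Open Scope ring_scope.

Section Aux.
Variables (K : fieldType) (n : nat).
Local Notation V := 'rV[K]_n.

Definition linF (F : V -> K) := forall c u v, F (c *: u + v) = c * F u + F v.
Definition linV (G : V -> V) := forall c u v, G (c *: u + v) = c *: G u + G v.

Lemma linF0 F : linF F -> F 0 = 0.
Proof.
move=> hF; have h := hF 1 0 0; rewrite scale1r addr0 mul1r in h.
by apply: (addrI (F 0)); rewrite addr0 -h.
Qed.

Lemma linFD F : linF F -> forall u v, F (u + v) = F u + F v.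
Proof. by move=> hF u v; rewrite -[u]scale1r hF mul1r scale1r. Qed.

Lemma linFZ F : linF F -> forall c u, F (c *: u) = c * F u.
Proof. by move=> hF c u; rewrite -[c *: u]addr0 hF linF0 // addr0. Qed.

Lemma linF_sum F : linF F -> forall (I : Type) (r : seq I) (P : pred I) (G : I -> V),
  F (\sum_(i <- r | P i) G i) = \sum_(i <- r | P i) F (G i).
Proof.
move=> hF I r P G; apply: (big_morph F (linFD hF) (linF0 hF)).
Qed.

Lemma linV0 G : linV G -> G 0 = 0.
Proof.
move=> hG; have h := hG 1 0 0; rewrite scale1r addr0 scale1r in h.
by apply: (addrI (G 0)); rewrite addr0 -h.
Qed.

Lemma linVD G : linV G -> forall u v, G (u + v) = G u + G v.
Proof. by move=> hG u v; rewrite -[u]scale1r hG !scale1r. Qed.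

Lemma linVZ G : linV G -> forall c u, G (c *: u) = c *: G u.
Proof. by move=> hG c u; rewrite -[c *: u]addr0 hG linV0 // addr0. Qed.

Lemma linV_sum G : linV G -> forall (I : Type) (r : seq I) (P : pred I) (H : I -> V),
  G (\sum_(i <- r | P i) H i) = \sum_(i <- r | P i) G (H i).
Proof.
move=> hG I r P H; apply: (big_morph G (linVD hG) (linV0 hG)).
Qed.

Lemma linF_comp F G : linF F -> linV G -> linF (fun t => F (G t)).
Proof. by move=> hF hG c u v /=; rewrite hG hF. Qed.

Variable W : 'M[K]_n.
Local Notation w := (bform W).

Lemma w_expandl x y : w x y = \sum_i x 0 i * (W *m y^T) i 0.
Proof. by rewrite /bform -mulmxA mxE. Qed.

Lemma w_linl z : linF (fun t => w t z).
Proof.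
move=> c u v /=; rewrite !w_expandl mulr_sumr -big_split /=.
by apply: eq_bigr => j _; rewrite !mxE; ring.
Qed.

Lemma w_expand x y : w x y = \sum_j (x *m W) 0 j * y 0 j.
Proof. by rewrite /bform mxE; apply: eq_bigr => j _; congr (_ * _); rewrite mxE. Qed.

Lemma w_linr z : linF (fun t => w z t).
Proof.
move=> c u v /=; rewrite !w_expand mulr_sumr -big_split /=.
apply: eq_bigr => j _; by rewrite !mxE; ring.
Qed.

Lemma w_sym : W^T = W -> forall x y, w x y = w y x.
Proof.
move=> hW x y; rewrite /bform.
have -> : (x *m W *m y^T) 0 0 = ((x *m W *m y^T)^T) 0 0 by rewrite [RHS]mxE.
by rewrite !trmx_mul trmxK hW mulmxA.
Qed.

End Aux.

Section Main.
Variables (K : fieldType) (n : nat).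
Local Notation V := 'rV[K]_n.
Variables (mul : V -> V -> V) (W R : 'M[K]_n).
Hypothesis hbil : bilinear_prod mul.
Hypothesis hW : W^T = W.
Hypothesis hR : R^T = R.
Local Notation w := (bform W).
Local Notation N := (Nop R W).
Local Notation eb := (e K).

Lemma RS a b : R a b = R b a.
Proof. by rewrite -{1}hR mxE. Qed.

Lemma mul_linl z : linV (fun t => mul t z).
Proof. by move=> c u v; rewrite (hbil.1 c u v z). Qed.
Lemma mul_linr x : linV (mul x).
Proof. by move=> c u v; rewrite (hbil.2 c x u v). Qed.

Lemma mul_suml (I : Type) (r : seq I) (P : pred I) (G : I -> V) z :
  mul (\sum_(i <- r | P i) G i) z = \sum_(i <- r | P i) mul (G i) z.
Proof. exact: (linV_sum (mul_linl z)). Qed.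
Lemma mul_sumr (I : Type) (r : seq I) (P : pred I) (G : I -> V) x :
  mul x (\sum_(i <- r | P i) G i) = \sum_(i <- r | P i) mul x (G i).
Proof. exact: (linV_sum (mul_linr x)). Qed.
Lemma mulZl c u z : mul (c *: u) z = c *: mul u z.
Proof. exact: (linVZ (mul_linl z)). Qed.
Lemma mulZr c u x : mul x (c *: u) = c *: mul x u.
Proof. exact: (linVZ (mul_linr x)). Qed.

Lemma linwl G z : linV G -> linF (fun t => w (G t) z).
Proof. by move=> hG; apply: (linF_comp (w_linl W z) hG). Qed.
Lemma linwr G z : linV G -> linF (fun t => w z (G t)).
Proof. by move=> hG; apply: (linF_comp (w_linr W z) hG). Qed.

Lemma NA F z : linF F ->
  \sum_a \sum_b R a b * (w z (eb a) * F (eb b)) = F (N z).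
Proof.
move=> hF; rewrite /Nop linF_sum //; apply: eq_bigr => a _.
rewrite linF_sum //; apply: eq_bigr => b _; rewrite linFZ //; ring.
Qed.

Lemma NAs F z : linF F ->
  \sum_a \sum_b R a b * (w (eb a) z * F (eb b)) = F (N z).
Proof.
move=> hF; rewrite -NA //; apply: eq_bigr => a _; apply: eq_bigr => b _.
by rewrite (w_sym hW (eb a) z).
Qed.

Lemma NB F z : linF F ->
  \sum_a \sum_b R a b * (F (eb a) * w z (eb b)) = F (N z).
Proof.
move=> hF; rewrite -NA // exchange_big; apply: eq_bigr => a _; apply: eq_bigr => b _.
by rewrite RS; ring.
Qed.

Lemma NBs F z : linF F ->
  \sum_a \sum_b R a b * (F (eb a) * w (eb b) z) = F (N z).
Proof.
move=> hF; rewrite -NB //; apply: eq_bigr => a _; apply: eq_bigr => b _.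
by rewrite (w_sym hW (eb b) z).
Qed.

Lemma SA v u : w (N v) u = w v (N u).
Proof.
rewrite -(NA v (w_linl W u)) -(NB u (w_linr W v)).
apply: eq_bigr => a _; apply: eq_bigr => b _.
by rewrite (w_sym hW (eb b) u).
Qed.

Lemma split3 (A B C : 'I_n -> 'I_n -> K) :
  \sum_a \sum_b R a b * (A a b + B a b - C a b) =
  \sum_a \sum_b R a b * A a b + \sum_a \sum_b R a b * B a b
  - \sum_a \sum_b R a b * C a b.
Proof.
rewrite -big_split -sumrB /=; apply: eq_bigr => a _.
rewrite -big_split -sumrB /=; apply: eq_bigr => b _; ring.
Qed.

Hypothesis hco : CcoPYBE mul R W.

Lemma CY x y z :
 (w (mul x (N y)) z + w (mul x (N z)) y - w (mul (N z) x) y)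
 - (w x (mul z (N y)) + w y (mul z (N x)) - w y (mul (N x) z))
 + (w (mul y (N x)) z + w x (mul y (N z)) - w x (mul (N z) y))
 - (w x (mul y (N z)) + w (mul y (N x)) z - w (mul (N x) y) z) = 0.
Proof.
have H := hco x y z; rewrite /Delta_ev in H; cbv beta in H.
rewrite !split3 in H.
rewrite (NBs y (linwl z (mul_linr x))) (NAs z (linwl y (mul_linr x)))
  (NAs z (linwl y (mul_linl x))) in H.
rewrite (NB y (linwr x (mul_linr z))) (NA x (linwr y (mul_linr z)))
  (NA x (linwr y (mul_linl z))) in H.
rewrite (NB x (linwl z (mul_linr y))) (NAs z (linwr x (mul_linr y)))
  (NAs z (linwr x (mul_linl y))) in H.
rewrite (NBs z (linwr x (mul_linr y))) (NA x (linwl z (mul_linr y)))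
  (NA x (linwl z (mul_linl y))) in H.
exact: H.
Qed.

Hypothesis hsy : forall x y z,
    w (mul x y) z + w (mul x z) y = w (mul z x) y + w (mul z y) x.

Lemma PW x y u :
  w x (mul u (N y)) + w y (mul u (N x)) - w y (mul (N x) u) + w (N (mul x y)) u
  = w (mul (N x) y) u + w (mul x (N y)) u.
Proof.
have e3 := CY x y u.
rewrite (w_sym hW x (mul (N u) y)) in e3.
have e2 : w (mul x y) (N u) + w (mul x (N u)) y
   - (w (mul (N u) x) y + w (mul (N u) y) x) = 0 by rewrite hsy subrr.
rewrite SA; apply/eqP; rewrite -subr_eq0; apply/eqP.
match type of e3 with ?C = 0 => match type of e2 with ?D = 0 =>
  transitivity (D - C); first ring end end.
by rewrite e2 e3 subrr.
Qed.

Definition pair3 x y (T : 'I_n -> 'I_n -> 'I_n -> K) : V :=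
  \sum_s (\sum_p \sum_q w x (eb p) * w y (eb q) * T p q s) *: eb s.

Lemma w_coord x u : w x u = \sum_p u 0 p * w x (eb p).
Proof.
rewrite {1}(row_sum_delta u) linF_sum; last exact: w_linr.
by apply: eq_bigr => p _; rewrite (linFZ (w_linr W x)).
Qed.

Lemma pair3_t3 x y u v z : pair3 x y (t3 u v z) = (w x u * w y v) *: z.
Proof.
rewrite [in RHS](row_sum_delta z) scaler_sumr /pair3; apply: eq_bigr => s _.
rewrite scalerA; congr (_ *: _).
rewrite (w_coord x u) (w_coord y v) -mulrA mulr_suml; apply: eq_bigr => p _.
rewrite mulr_suml mulr_sumr; apply: eq_bigr => q _; rewrite /t3; ring.
Qed.

Lemma pair3_sum x y (T : 'I_n -> 'I_n -> 'I_n -> 'I_n -> K) :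
  pair3 x y (fun p q s => \sum_i T i p q s) = \sum_i pair3 x y (T i).
Proof.
rewrite /pair3 [RHS]exchange_big; apply: eq_bigr => s _.
rewrite -scaler_suml; congr (_ *: _).
rewrite [RHS]exchange_big; apply: eq_bigr => p _.
rewrite [RHS]exchange_big; apply: eq_bigr => q _.
by rewrite mulr_sumr.
Qed.

Lemma pair3_scale x y c (T : 'I_n -> 'I_n -> 'I_n -> K) :
  pair3 x y (fun p q s => c * T p q s) = c *: pair3 x y T.
Proof.
rewrite /pair3 scaler_sumr; apply: eq_bigr => s _; rewrite scalerA; congr (_ *: _).
rewrite mulr_sumr; apply: eq_bigr => p _; rewrite mulr_sumr; apply: eq_bigr => q _.
ring.
Qed.

Lemma pair3_add x y (A B : 'I_n -> 'I_n -> 'I_n -> K) :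
  pair3 x y (fun p q s => A p q s + B p q s) = pair3 x y A + pair3 x y B.
Proof.
rewrite /pair3 -big_split /=; apply: eq_bigr => s _; rewrite -scalerDl; congr (_ *: _).
rewrite -big_split /=; apply: eq_bigr => p _; rewrite -big_split /=; apply: eq_bigr => q _.
ring.
Qed.

Lemma pair3_opp x y (A : 'I_n -> 'I_n -> 'I_n -> K) :
  pair3 x y (fun p q s => - A p q s) = - pair3 x y A.
Proof.
rewrite /pair3 -sumrN; apply: eq_bigr => s _; rewrite -scaleNr; congr (_ *: _).
rewrite -sumrN; apply: eq_bigr => p _; rewrite -sumrN; apply: eq_bigr => q _.
ring.
Qed.

Lemma pair3_zero x y : pair3 x y (fun _ _ _ => 0) = 0.
Proof.
rewrite /pair3 big1 // => s _; rewrite big1 ?scale0r // => p _.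
by rewrite big1 // => q _; rewrite mulr0.
Qed.

Lemma pair3_ext x y (A B : 'I_n -> 'I_n -> 'I_n -> K) :
  (forall p q s, A p q s = B p q s) -> pair3 x y A = pair3 x y B.
Proof.
move=> h; rewrite /pair3; apply: eq_bigr => s _; congr (_ *: _).
by apply: eq_bigr => p _; apply: eq_bigr => q _; rewrite h.
Qed.

Lemma pair3_big4 x y (G : 'I_n -> 'I_n -> 'I_n -> 'I_n -> K)
  (U U' Z : 'I_n -> 'I_n -> 'I_n -> 'I_n -> V) :
  pair3 x y (fun p q s => \sum_a \sum_b \sum_c \sum_d
     G a b c d * t3 (U a b c d) (U' a b c d) (Z a b c d) p q s)
  = \sum_a \sum_b \sum_c \sum_d
     (G a b c d * (w x (U a b c d) * w y (U' a b c d))) *: Z a b c d.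
Proof.
rewrite pair3_sum; apply: eq_bigr => a _; cbv beta.
rewrite pair3_sum; apply: eq_bigr => b _; cbv beta.
rewrite pair3_sum; apply: eq_bigr => c _; cbv beta.
rewrite pair3_sum; apply: eq_bigr => d _; cbv beta.
by rewrite pair3_scale pair3_t3 scalerA.
Qed.

Definition S (f : 'I_n -> K) : V := \sum_a \sum_b (R a b * f a) *: eb b.

Lemma S_add f g : S f + S g = S (fun a => f a + g a).
Proof.
rewrite /S -big_split /=; apply: eq_bigr => a _.
rewrite -big_split /=; apply: eq_bigr => b _; rewrite -scalerDl; congr (_ *: _); ring.
Qed.

Lemma S_sub f g : S f - S g = S (fun a => f a - g a).
Proof.
rewrite /S -sumrB /=; apply: eq_bigr => a _.
rewrite -sumrB /=; apply: eq_bigr => b _; rewrite -scalerBl; congr (_ *: _); ring.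
Qed.

Lemma S_ext f g : (forall a, f a = g a) -> S f = S g.
Proof. by move=> h; rewrite /S; apply: eq_bigr => a _; apply: eq_bigr => b _; rewrite h. Qed.

Lemma hB x y :
  \sum_a \sum_b \sum_c \sum_d (R a b * R c d * (w x (eb a) * w y (eb c))) *: mul (eb b) (eb d)
  = mul (N x) (N y).
Proof.
rewrite /Nop mul_suml; apply: eq_bigr => a _; rewrite mul_suml; apply: eq_bigr => b _.
rewrite mulZl mul_sumr scaler_sumr; apply: eq_bigr => c _.
rewrite mul_sumr scaler_sumr; apply: eq_bigr => d _.
rewrite mulZr scalerA; congr (_ *: _); ring.
Qed.

Lemma hA x y :
  \sum_a \sum_b \sum_c \sum_d (R a b * R c d * (w x (mul (eb a) (eb c)) * w y (eb d))) *: eb b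
  = S (fun a => w x (mul (eb a) (N y))).
Proof.
rewrite /S; apply: eq_bigr => a _; apply: eq_bigr => b _.
rewrite -(NB y (linwr x (mul_linr (eb a)))) mulr_sumr scaler_suml; apply: eq_bigr => c _.
rewrite mulr_sumr scaler_suml; apply: eq_bigr => d _; congr (_ *: _); ring.
Qed.

Lemma hC x y :
  \sum_a \sum_b \sum_c \sum_d (R a b * R c d * (w x (eb c) * w y (mul (eb a) (eb d)))) *: eb b
  = S (fun a => w y (mul (eb a) (N x))).
Proof.
rewrite /S; apply: eq_bigr => a _; apply: eq_bigr => b _.
rewrite -(NA x (linwr y (mul_linr (eb a)))) mulr_sumr scaler_suml; apply: eq_bigr => c _.
rewrite mulr_sumr scaler_suml; apply: eq_bigr => d _; congr (_ *: _); ring.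
Qed.

Lemma reorder4 (F : 'I_n -> 'I_n -> 'I_n -> 'I_n -> V) :
  \sum_a \sum_b \sum_c \sum_d F a b c d = \sum_c \sum_d \sum_a \sum_b F a b c d.
Proof.
transitivity (\sum_a \sum_c \sum_b \sum_d F a b c d).
  by apply: eq_bigr => a _; rewrite exchange_big.
rewrite exchange_big; apply: eq_bigr => c _.
transitivity (\sum_a \sum_d \sum_b F a b c d).
  by apply: eq_bigr => a _; rewrite exchange_big.
by rewrite exchange_big.
Qed.

Lemma hD x y :
  \sum_a \sum_b \sum_c \sum_d (R a b * R c d * (w x (eb a) * w y (mul (eb b) (eb c)))) *: eb d
  = S (fun c => w y (mul (N x) (eb c))).
Proof.
rewrite reorder4 /S; apply: eq_bigr => c _; apply: eq_bigr => d _.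
rewrite -(NA x (linwr y (mul_linl (eb c)))) mulr_sumr scaler_suml; apply: eq_bigr => a _.
rewrite mulr_sumr scaler_suml; apply: eq_bigr => b _; congr (_ *: _); ring.
Qed.

Hypothesis hyb : CPYBE mul R.

Lemma NN x y : mul (N x) (N y) =
  S (fun a => w x (mul (eb a) (N y))) + S (fun a => w y (mul (eb a) (N x)))
  - S (fun c => w y (mul (N x) (eb c))).
Proof.
have E : pair3 x y (fun p q s => r13r12 mul R p q s - r13r23 mul R p q s
    + r23r12 mul R p q s - r12r23 mul R p q s) = 0.
  by rewrite -(pair3_zero x y); apply: pair3_ext => p q s; rewrite hyb.
rewrite !pair3_add !pair3_opp /r13r12 /r13r23 /r23r12 /r12r23 !pair3_big4 in E.
rewrite hA hB hC hD in E.
set A := S _ in E *; set C := S (fun a => w y _) in E *; set D := S (fun c => _) in E *.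
apply/eqP; rewrite eq_sym -subr_eq0 -E; apply/eqP.
by rewrite addrAC [A + C - _]addrAC.
Qed.

Lemma nij : nijenhuis mul N.
Proof.
move=> x y; rewrite NN.
rewrite -/(S (fun a => w (N (mul x y)) (eb a))) -/(S (fun a => w (mul (N x) y) (eb a)))
  -/(S (fun a => w (mul x (N y)) (eb a))).
rewrite S_add S_sub S_add S_add; apply: S_ext => a; exact: PW.
Qed.

End Main.

Theorem theorem3p9 (K : fieldType) (n : nat)
  (mul : 'rV[K]_n -> 'rV[K]_n -> 'rV[K]_n) (W R : 'M[K]_n) :
  perm_algebra mul ->
  symplectic mul W ->
  symmetric_tensor R ->
  CPYBE mul R ->
  CcoPYBE mul R W ->
  nijenhuis mul (Nop R W).
Proof.
move=> [hbil _] [hW hsy] hR hyb hco.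
exact: (nij hbil hW hR hco hsy hyb).
Qed.
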